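(* In the setting below, suppose $M_i(1)=M_i(0)$ for all $i$, and let $\alpha\in(0,1/2)$. Suppose $\mathcal I^\alpha_{\texttt o,k}$, $1\le k\le|\mathcal S|$, are random sets (functions of the observed data), each of the form $(c,\infty)$ or $[c,\infty)$ for some $c\in\overline{\mathbb R}$, such that $\mathbb P(\tau_{\texttt o(k)}\in\mathcal I^\alpha_{\texttt o,k}\text{ for all }1\le k\le|\mathcal S|)\ge1-2\alpha$. Define $\mathcal I^\alpha_{k,\texttt{sharp}}=\mathbb R$ for $1\le k\le|\mathcal S^\complement|$ and $\mathcal I^\alpha_{k,\texttt{sharp}}=\mathcal I^\alpha_{\texttt o,k-|\mathcal S^\complement|}$ for $|\mathcal S^\complement|+1\le k\le n$. Then $\mathbb P(\tau_{(k)}\in\mathcal I^\alpha_{k,\texttt{sharp}}\text{ for all }1\le k\le n)\ge1-2\alpha$.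
   Context: There are $n$ units with fixed potential outcomes $Y_i^\star(0),Y_i^\star(1)\in\mathbb R$ and fixed potential missingness indicators $M_i(0),M_i(1)\in\{0,1\}$; $\tau_i=Y_i^\star(1)-Y_i^\star(0)$. $\boldsymbol Z\in\{0,1\}^n$ is uniform over vectors with exactly $n_1$ ones ($n_1,n_0\ge1$ fixed, $n_1+n_0=n$), independent of all potential quantities. $M_i=Z_iM_i(1)+(1-Z_i)M_i(0)$; $\mathcal S=\{i:M_i=1\}$ (fixed under $M_i(1)=M_i(0)$), $\mathcal S^\complement$ its complement. $\tau_{(1)}\le\dots\le\tau_{(n)}$ are the sorted individual effects of all units and $\tau_{\texttt o(1)}\le\dots\le\tau_{\texttt o(|\mathcal S|)}$ the sorted individual effects of units in $\mathcal S$. $\overline{\mathbb R}=\mathbb R\cup\{\pm\infty\}$. *)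

(* Defs.v *)
From HB Require Import structures.
From mathcomp Require Import all_boot all_order all_algebra.
From mathcomp Require Import reals constructive_ereal.
Set Implicit Arguments. Unset Strict Implicit. Unset Printing Implicit Defensive.
Import Order.TTheory GRing.Theory Num.Theory.
Local Open Scope ring_scope.

(* A treatment assignment Z in {0,1}^n. *)
Definition assign (n : nat) := {ffun 'I_n -> bool}.

Definition valid_assign (n n1 : nat) (z : assign n) : bool :=
  #|[pred i | z i]| == n1.

Definition Pr (R : realType) (n n1 : nat) (E : pred (assign n)) : R :=
  (#|[pred z : assign n | valid_assign n1 z && E z]|%:R) / (#|[pred z : assign n | valid_assign n1 z]|%:R).

(* k-th smallest (1-indexed) of the values tau i, i in A. *)
Definition order_stat (R : realType) (n : nat) (tau : 'I_n -> R)
    (A : {set 'I_n}) (k : nat) : R :=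
  nth 0 (sort (fun x y : R => x <= y) [seq tau i | i <- enum A]) k.-1.

(* A set of the form (c, oo) (strict = true) or [c, oo) (strict = false),
   c in \bar R, given as a boolean membership predicate on R. *)
Definition upper_set (R : realType) (cs : \bar R * bool) : pred R :=
  fun x => if cs.2 then (cs.1 < x%:E)%E else (cs.1 <= x%:E)%E.

Definition I_sharp (R : realType) (n : nat) (S : {set 'I_n})
    (Io : nat -> \bar R * bool) (k : nat) : pred R :=
  if (k <= #|~: S|)%N then (fun _ => true) else upper_set (Io (k - #|~: S|)%N).

(* Main.v *)
Require Import Defs.
From HB Require Import structures.
From mathcomp Require Import all_boot all_order all_algebra.
From mathcomp Require Import reals constructive_ereal.
From mathcomp Require Import zify.
Import Order.TTheory GRing.Theory Num.Theory.
Local Open Scope ring_scope.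

Lemma cnt_le (R : realType) (t : seq R) j :
  sorted <=%O t -> (j < size t)%N -> (count (fun y : R => (y < nth 0 t j)%R) t <= j)%N.
Proof.
move=> st jt; set x := nth 0 t j.
rewrite leqNgt; apply/negP => hc.
have := sorted_filter_lt x st => E.
have : nth 0 (take (count (< x)%O t) t) j \in [seq y <- t | (y < x)%O].
  by rewrite -E mem_nth // size_filter.
by rewrite nth_take // mem_filter ltxx.
Qed.

Lemma ge_of_cnt (R : realType) (a : seq R) x i :
  sorted <=%O a -> (i < size a)%N -> (count (< x)%O a <= i)%N -> x <= nth 0 a i.
Proof.
move=> sa ia hc.
have E := sorted_filter_ge x sa.
have : nth 0 (drop (count (< x)%O a) a) (i - count (< x)%O a) \in [seq y <- a | (x <= y)%O].
  rewrite E mem_nth // size_drop.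
  by rewrite ltn_sub2r // (leq_ltn_trans hc).
by rewrite nth_drop subnKC // mem_filter => /andP[].
Qed.

Lemma key (R : realType) (s u : seq R) j :
  (j < size s)%N ->
  nth 0 (sort (fun x y : R => x <= y) s) j <=
  nth 0 (sort (fun x y : R => x <= y) (s ++ u)) (j + size u).
Proof.
move=> js.
set t := sort _ s; set a := sort _ (s ++ u).
have st : sorted <=%O t by apply: sort_sorted; exact: le_total.
have sa : sorted <=%O a by apply: sort_sorted; exact: le_total.
have szt : size t = size s by rewrite size_sort.
have sza : size a = size s + size u by rewrite size_sort size_cat.
apply: ge_of_cnt => //; first by rewrite sza ltn_add2r.
have pa : perm_eq a (s ++ u) by rewrite perm_sort.
have pt : perm_eq t s by rewrite perm_sort.
rewrite (permP pa) count_cat -(permP pt).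
apply: leq_add; first by apply: cnt_le => //; rewrite szt.
exact: count_size.
Qed.

Lemma Pr_mono (R : realType) n n1 (E F : pred (assign n)) :
  (forall z, E z -> F z) -> Pr R n1 E <= Pr R n1 F.
Proof.
move=> EF; rewrite /Pr ler_wpM2r // ?invr_ge0 ?ler0n // ler_nat.
apply: subset_leq_card; apply/subsetP => z; rewrite !inE => /andP[-> /EF ->].
by [].
Qed.

Lemma upper_mono (R : realType) cs (x y : R) :
  upper_set cs x -> x <= y -> upper_set cs y.
Proof.
rewrite /upper_set; case: cs => c [] /= h xy.
  by apply: (lt_le_trans h); rewrite lee_fin.
by apply: (le_trans h); rewrite lee_fin.
Qed.

Lemma os_le (R : realType) n (tau : 'I_n -> R) (S : {set 'I_n}) k :
  (1 <= k <= #|S|)%N ->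
  order_stat tau S k <= order_stat tau setT (k + #|~: S|)%N.
Proof.
move=> /andP[k1 kS]; rewrite /order_stat.
have -> : sort (fun x y : R => x <= y) [seq tau i | i <- enum [set: 'I_n]] =
          sort (fun x y : R => x <= y) ([seq tau i | i <- enum S] ++ [seq tau i | i <- enum (~: S)]).
  apply/perm_sortP; [exact: le_total | exact: le_trans | exact: le_anti |].
  rewrite -map_cat; apply: perm_map; apply: uniq_perm.
  - exact: enum_uniq.
  - rewrite cat_uniq !enum_uniq /= andbT; apply/hasPn => i.
    by rewrite !mem_enum in_setC => ->.
  - by move=> i; rewrite mem_cat !mem_enum in_setC in_setT; case: (i \in S).
have -> : ((k + #|~: S|).-1 = k.-1 + size [seq tau i | i <- enum (~: S)])%N.
  by rewrite size_map -cardE; case: (k) k1 => // k0 _; rewrite addSn.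
apply: key; rewrite size_map -cardE; by case: (k) k1 kS.
Qed.

Theorem corollary1 (R : realType) (n n1 : nat)
  (Y0 Y1 : 'I_n -> R) (M0 M1 : 'I_n -> bool)
  (alpha : R)
  (Io : assign n -> nat -> \bar R * bool) :
  (0 < n1)%N -> (n1 < n)%N ->
  (forall i, M1 i = M0 i) ->
  0 < alpha -> alpha < 1 / 2 ->
  let tau := fun i => Y1 i - Y0 i in
  let S := [set i | M0 i] in
  1 - 2 * alpha <=
    Pr R n1 (fun z => all (fun k => upper_set (Io z k) (order_stat tau S k))
                          (iota 1 #|S|)) ->
  1 - 2 * alpha <=
    Pr R n1 (fun z => all (fun k => I_sharp S (Io z) k (order_stat tau setT k))
                          (iota 1 n)).
Proof.
move=> _ _ _ _ _ tau S H; apply: (le_trans H); apply: Pr_mono => z /allP Hz.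
have hn : (#|S| + #|~: S| = n)%N by rewrite cardsC card_ord.
apply/allP => k; rewrite mem_iota => /andP[k1 kn].
rewrite /I_sharp; case: ifP => // hk.
move/negbT: hk; rewrite -ltnNge => hk.
have hk' : (1 <= k - #|~: S| <= #|S|)%N.
  apply/andP; split; first by rewrite subn_gt0.
  by rewrite leq_subLR addnC hn -ltnS -add1n.
have hm : (k - #|~: S|)%N \in iota 1 #|S| by rewrite mem_iota add1n ltnS.
have U := Hz _ hm. refine (@upper_mono _ _ _ _ U _).
have := @os_le _ _ tau _ _ hk'.
by rewrite subnK // ltnW.
Qed.
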